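(* Let $G$ be a countable even-by-quotient abelian group, let $r_0(G)$ be its torsion free rank and $r_2(G)$ its $2$-rank. Then there is a monomorphism \[f:G\to\bigoplus_{i=1}^{r_0(G)}\mathbb Z[\tfrac12]\oplus\bigoplus_{i=1}^{r_2(G)}\mathbb Z(2^\infty).\] Moreover, given a maximal independent system $L=\{g_i\}_{i=1}^{r_0(G)}\cup\{h_i\}_{i=1}^{r_2(G)}$ of $G$ with the $g_i$ of infinite order and the $h_i$ in the socle of $G$, $f$ can be chosen so that $f(g_i)$ is the element $1$ of the $i$-th $\mathbb Z[\tfrac12]$ summand (and $0$ elsewhere) and $f(h_i)$ is the element of order $2$ of the $i$-th $\mathbb Z(2^\infty)$ summand (and $0$ elsewhere).
   Context: A set of nonzero elements $\{x_j\}$ of an abelian group is independent if $\sum n_jx_j=0$ implies $n_jx_j=0$ for all $j$. $G$ is even-by-quotient if, for $H$ the subgroup generated by a maximal independent system of elements of infinite order, every element of $G/H$ has order a power of $2$. $r_0(G)=\dim_{\mathbb Q}(G\otimes\mathbb Q)$; $r_2(G)$ is the cardinality of a maximal independent system of elements of order $2$. The socle of $G$ is the subgroup of elements whose order is square-free (here: of order $1$ or $2$). $\mathbb Z[\tfrac12]=\{m/2^k\}$ and $\mathbb Z(2^\infty)=\varinjlim(\mathbb Z_2\to\mathbb Z_4\to\cdots)\cong\mathbb Z[\tfrac12]/\mathbb Z$. *)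

(* Defs.v *)
From mathcomp Require Import all_boot all_order all_algebra.
From Stdlib Require List.
Set Implicit Arguments. Unset Strict Implicit. Unset Printing Implicit Defensive.
Import Order.TTheory GRing.Theory Num.Theory.
Local Open Scope ring_scope.

Definition infinite_order (G : zmodType) (x : G) : Prop :=
  forall n : nat, (0 < n)%N -> x *+ n <> 0.

Definition independent (G : zmodType) (S : G -> Prop) : Prop :=
  (forall x, S x -> x <> 0) /\
  forall (s : seq G) (n : G -> int),
    uniq s -> (forall x, x \in s -> S x) ->
    \sum_(x <- s) x *~ n x = 0 -> forall x, x \in s -> x *~ n x = 0.

Definition max_independent (G : zmodType) (S : G -> Prop) : Prop :=
  independent S /\
  forall y, ~ S y -> ~ independent (fun x => S x \/ x = y).

Definition max_independent_inf (G : zmodType) (S : G -> Prop) : Prop :=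
  independent S /\ (forall x, S x -> infinite_order x) /\
  forall y, ~ S y -> infinite_order y -> ~ independent (fun x => S x \/ x = y).

Definition span (G : zmodType) (S : G -> Prop) (x : G) : Prop :=
  exists (s : seq G) (n : G -> int),
    (forall y, y \in s -> S y) /\ x = \sum_(y <- s) y *~ n y.

Definition quotient_2primary (G : zmodType) (S : G -> Prop) : Prop :=
  forall x : G, exists k : nat, span S (x *+ 2 ^ k).

Definition even_by_quotient (G : zmodType) : Prop :=
  exists S : G -> Prop, max_independent_inf S /\ quotient_2primary S.

Definition countable_group (G : zmodType) : Prop :=
  exists e : G -> nat, injective e.

Definition adapted_system (G : zmodType) (I J : Type) (g : I -> G) (h : J -> G)
  : Prop :=
  injective g /\ injective h /\ (forall i j, g i <> h j) /\
  (forall i, infinite_order (g i)) /\ (forall j, h j *+ 2 = 0) /\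
  max_independent (fun x => (exists i, x = g i) \/ (exists j, x = h j)).

(* Z[1/2] = dyadic rationals; Z(2^oo) = Z[1/2]/Z, each class represented by its
   unique dyadic representative in [0,1).  An element of the direct sum is a pair
   (a, b) with a : I -> rat, b : J -> rat finitely supported; the group law is
   componentwise addition, taken modulo 1 on the b-part. *)

Definition dyadic (q : rat) : Prop :=
  exists (m : int) (k : nat), q = m%:~R / (2 ^ k)%:R.

Definition is_integer (q : rat) : Prop := exists m : int, q = m%:~R.

Definition Z2inf_rep (q : rat) : Prop := dyadic q /\ 0 <= q /\ q < 1.

Definition dsum_monomorphism (G : zmodType) (I J : Type)
  (a : G -> I -> rat) (b : G -> J -> rat) : Prop :=
  (forall x i, dyadic (a x i)) /\
  (forall x j, Z2inf_rep (b x j)) /\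
  (forall x, exists s : list I, forall i, a x i <> 0 -> List.In i s) /\
  (forall x, exists s : list J, forall j, b x j <> 0 -> List.In j s) /\
  (forall x y i, a (x + y) i = a x i + a y i) /\
  (forall x y j, is_integer (b (x + y) j - (b x j + b y j))) /\
  (forall x y, a x = a y -> b x = b y -> x = y).

(* Main.v *)
Require Import Defs.
From mathcomp Require Import all_boot all_order all_algebra.
From Stdlib Require Import Classical ClassicalEpsilon FunctionalExtensionality PropExtensionality.
From mathcomp.algebra_tactics Require Import ring.
Import Order.TTheory GRing.Theory Num.Theory.
Local Open Scope ring_scope.
Set Implicit Arguments. Unset Strict Implicit. Unset Printing Implicit Defensive.
Import Order.TTheory GRing.Theory Num.Theory.
Local Open Scope ring_scope.

Section PairLists.
Variable G : zmodType.
Implicit Types (l : seq (G * int)) (S : G -> Prop).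

Definition psum l : G := \sum_(p <- l) p.1 *~ p.2.
Definition pcoef l (y : G) : int := \sum_(p <- l | p.1 == y) p.2.
Definition pover S l := forall p, p \in l -> S p.1.
Definition pspan S x := exists l, pover S l /\ x = psum l.
Definition pscale l (c : int) := [seq (p.1, p.2 * c) | p <- l].

Lemma psum_cat l1 l2 : psum (l1 ++ l2) = psum l1 + psum l2.
Proof. by rewrite /psum big_cat. Qed.
Lemma pcoef_cat l1 l2 y : pcoef (l1 ++ l2) y = pcoef l1 y + pcoef l2 y.
Proof. by rewrite /pcoef big_cat. Qed.
Lemma psum_scale l c : psum (pscale l c) = psum l *~ c.
Proof. by rewrite /psum big_map mulrz_suml; apply: eq_bigr => p _ /=; rewrite mulrzA. Qed.
Lemma pcoef_scale l c y : pcoef (pscale l c) y = pcoef l y * c.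
Proof. by rewrite /pcoef big_map big_distrl. Qed.
Lemma pover_cat S l1 l2 : pover S l1 -> pover S l2 -> pover S (l1 ++ l2).
Proof. by move=> h1 h2 p; rewrite mem_cat => /orP[/h1|/h2]. Qed.
Lemma pover_scale S l c : pover S l -> pover S (pscale l c).
Proof. by move=> h p /mapP[q /h hq ->]. Qed.
Lemma pover_nil S : pover S [::].
Proof. by move=> p. Qed.
Lemma pover1 S y c : S y -> pover S [:: (y, c)].
Proof. by move=> hy p; rewrite inE => /eqP ->. Qed.
Lemma psum1 y c : psum [:: (y, c)] = y *~ c.
Proof. by rewrite /psum big_seq1. Qed.
Lemma pcoef1 y c z : pcoef [:: (y, c)] z = if y == z then c else 0.
Proof. by rewrite /pcoef big_mkcond big_seq1. Qed.
Lemma psum_nil : psum [::] = 0.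
Proof. by rewrite /psum big_nil. Qed.
Lemma pcoef_nil y : pcoef [::] y = 0.
Proof. by rewrite /pcoef big_nil. Qed.

Lemma pcoef_notin l y : y \notin map fst l -> pcoef l y = 0.
Proof.
move=> hy; rewrite /pcoef big_hasC //; apply/hasPn => p pl /=.
by apply/eqP => e; move: hy; rewrite -e; case/negP; apply/mapP; exists p.
Qed.

Lemma psum_regroup l :
  psum l = \sum_(y <- undup (map fst l)) y *~ pcoef l y.
Proof.
rewrite /psum /pcoef.
under [RHS]eq_bigr => y _ do rewrite mulrz_sumr.
under [RHS]eq_bigr => y _ do rewrite big_mkcond.
rewrite exchange_big /=; apply: eq_big_seq => p pl.
rewrite -big_mkcond /=.
have -> : \sum_(i <- undup [seq i.1 | i <- l] | p.1 == i) i *~ p.2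
        = \sum_(i <- undup [seq i.1 | i <- l] | i == p.1) p.1 *~ p.2.
  by apply: eq_big => [i|i /eqP <-] //; rewrite eq_sym.
rewrite -big_filter.
have -> : [seq i <- undup [seq i.1 | i <- l] | i == p.1] = [:: p.1].
  have hp : p.1 \in undup [seq i.1 | i <- l].
    by rewrite mem_undup; apply/mapP; exists p.
  by rewrite -(filter_pred1_uniq (undup_uniq _) hp).
by rewrite big_seq1.
Qed.

Lemma psum0_of_coef l : (forall y, y *~ pcoef l y = 0) -> psum l = 0.
Proof. by move=> h; rewrite psum_regroup big1. Qed.

Lemma indep_psum0 S l : independent S -> pover S l -> psum l = 0 ->
  forall y, y *~ pcoef l y = 0.
Proof.
move=> [_ hind] hl hs y.
case: (boolP (y \in undup (map fst l))) => hy; last first.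
  by rewrite pcoef_notin ?mulr0z // -mem_undup.
apply: (hind (undup (map fst l)) (pcoef l) (undup_uniq _)) => //.
  by move=> x; rewrite mem_undup => /mapP[p /hl hp ->].
by rewrite -psum_regroup.
Qed.

Definition pneg l := pscale l (-1).

Lemma indep_coef S l1 l2 : independent S -> pover S l1 -> pover S l2 ->
  psum l1 = psum l2 -> forall y, y *~ (pcoef l1 y - pcoef l2 y) = 0.
Proof.
move=> hS h1 h2 e y.
have := indep_psum0 hS (pover_cat h1 (pover_scale (c:=-1) h2)) _ y.
rewrite pcoef_cat pcoef_scale psum_cat psum_scale e mulrN1 mulrN1z subrr.
by apply.
Qed.

Lemma info_z (x : G) c : infinite_order x -> x *~ c = 0 -> c = 0.
Proof.
move=> hx; case: c => n /= e.
  by case: n e => // n e; exfalso; apply: (hx n.+1).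
by exfalso; apply: (hx n.+1) => //; apply/eqP; rewrite -oppr_eq0 -e NegzE mulrNz pmulrn.
Qed.

Lemma ord2_n (h : G) n : h *+ 2 = 0 -> h *+ n = if odd n then h else 0.
Proof.
move=> h2; elim: n => [|n IH]; first by rewrite mulr0n.
rewrite mulrS IH /=; case: (odd n) => /=; last by rewrite addr0.
by rewrite -mulr2n h2.
Qed.

Lemma ord2_z (h : G) c : h *+ 2 = 0 -> h *~ c = if odd `|c|%N then h else 0.
Proof.
move=> h2; case: c => n /=; first exact: ord2_n.
rewrite NegzE mulrNz -pmulrn ord2_n //; case: ifP => _; last by rewrite oppr0.
by apply/eqP; rewrite eqr_oppLR -subr_eq0 opprK -mulr2n h2.
Qed.

Lemma pspan_psum S l : pover S l -> pspan S (psum l).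
Proof. by move=> h; exists l. Qed.

Lemma maxind_pspan S w : max_independent S -> w <> 0 ->
  exists c, w *~ c <> 0 /\ pspan S (w *~ c).
Proof.
move=> [hS hmax] w0.
case: (classic (S w)) => Sw.
  by exists 1; split; rewrite mulr1z //; exists [:: (w, 1)]; rewrite psum1; split => //; apply: pover1.
apply: NNPP => H; apply: (hmax w Sw); split.
  by move=> x [/(proj1 hS)//|->].
move=> s n us hs sum0 x xs.
have relS : forall s', uniq s' -> (forall x, x \in s' -> S x) ->
     \sum_(x <- s') x *~ n x = 0 -> forall x, x \in s' -> x *~ n x = 0.
  by move=> s' u' h'; apply: (proj2 hS).
case: (boolP (w \in s)) => ws; last first.
  apply: (relS s us) => // y ys; case: (hs y ys) => // e; by move: ws; rewrite -e ys.
move: sum0; rewrite (bigD1_seq w ws us) /= => sum0.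
set l := [seq (i, n i) | i <- s & i != w].
have lS : pover S l.
  move=> p /mapP[i]; rewrite mem_filter => /andP[iw iS] -> /=.
  by case: (hs i iS) => // e; move: iw; rewrite e eqxx.
have el : \sum_(i <- s | i != w) i *~ n i = psum l.
  by rewrite /psum /l big_map big_filter.
case: (eqVneq (w *~ n w) 0) => wn; last first.
  exfalso; apply: H; exists (n w); split; first exact/eqP.
  exists (pscale l (-1)); split; first exact: pover_scale.
  by rewrite psum_scale mulrN1z -el; apply/eqP; rewrite -addr_eq0 sum0.
move: sum0; rewrite wn add0r => sum0.
case: (eqVneq x w) => [->//|xw].
apply: (relS [seq i <- s | i != w]) => //.
- exact: filter_uniq.
- move=> y; rewrite mem_filter => /andP[yw ys].
  by case: (hs y ys) => // e; move: yw; rewrite e eqxx.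
- by rewrite big_filter.
- by rewrite mem_filter xw.
Qed.

Lemma socle_pspan S w : max_independent S -> w <> 0 -> w *+ 2 = 0 -> pspan S w.
Proof.
move=> hm w0 w2; have [c [c0 hc]] := maxind_pspan hm w0.
by move: c0 hc; rewrite ord2_z //; case: ifP.
Qed.

Lemma psum_split (a : pred (G * int)) l :
  psum l = psum (filter a l) + psum (filter (predC a) l).
Proof. by rewrite /psum !big_filter (bigID a). Qed.

Lemma pcoef_split (a : pred (G * int)) l y :
  pcoef l y = pcoef (filter a l) y + pcoef (filter (predC a) l) y.
Proof.
rewrite /pcoef !big_filter_cond (bigID a) /=; congr (_ + _); apply: eq_bigl => p.
  by rewrite andbC.
by rewrite andbC.
Qed.

Lemma pover_filter S (a : pred (G * int)) l : pover S l -> pover S (filter a l).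
Proof. by move=> h p; rewrite mem_filter => /andP[_ /h]. Qed.

Lemma psum_same x l : (forall p, p \in l -> p.1 = x) -> psum l = x *~ pcoef l x.
Proof.
move=> h; rewrite /pcoef mulrz_sumr /psum big_seq_cond [RHS]big_seq_cond.
apply: eq_big => [p|p /andP[pl _]]; first by case pl: (p \in l) => //=; rewrite (h p pl) eqxx.
by rewrite (h p pl).
Qed.

Lemma pspan_add S u v : pspan S u -> pspan S v -> pspan S (u + v).
Proof.
by move=> [l1 [h1 ->]] [l2 [h2 ->]]; exists (l1 ++ l2); rewrite psum_cat; split => //; apply: pover_cat.
Qed.

Lemma pspan_mulz S u c : pspan S u -> pspan S (u *~ c).
Proof. by move=> [l [hl ->]]; exists (pscale l c); rewrite psum_scale; split => //; apply: pover_scale. Qed.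

Lemma pspan_comb S l : (forall p, p \in l -> pspan S p.1) -> pspan S (psum l).
Proof.
elim: l => [|p l IH] h; first by exists [::]; rewrite psum_nil; split => //; apply: pover_nil.
have -> : psum (p :: l) = psum [:: p] + psum l by rewrite -psum_cat.
case: p h => y c h; rewrite psum1; apply: pspan_add.
  by apply: pspan_mulz; apply: (h (y, c)); rewrite inE eqxx.
by apply: IH => q ql; apply: h; rewrite inE ql orbT.
Qed.

Lemma pcoef_map_uniq (s : seq G) (n : G -> int) x : uniq s -> x \in s ->
  pcoef [seq (y, n y) | y <- s] x = n x.
Proof.
move=> us xs; rewrite /pcoef big_map -big_filter /=.
by rewrite (filter_pred1_uniq us xs) big_seq1.
Qed.
End PairLists.
Set Implicit Arguments. Unset Strict Implicit. Unset Printing Implicit Defensive.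
Import Order.TTheory GRing.Theory Num.Theory.
Local Open Scope ring_scope.

Definition cpick (T : Type) (P : T -> Prop) (d : T) : T :=
  match excluded_middle_informative (exists x, P x) with
  | left H => proj1_sig (constructive_indefinite_description _ H)
  | right _ => d end.

Lemma cpickP (T : Type) (P : T -> Prop) d : (exists x, P x) -> P (cpick P d).
Proof.
rewrite /cpick => H; case: excluded_middle_informative => // H'.
exact: proj2_sig.
Qed.

Lemma In_pmap (T : eqType) (U : Type) (f : T -> option U) s z y :
  z \in s -> f z = Some y -> List.In y (pmap f s).
Proof.
elim: s => // a s IH; rewrite inE => /orP[/eqP <-|zs] fz /=.
  by rewrite fz; left.
by case: (f a) => [u|]; [right|]; apply: IH.
Qed.

Lemma indep_sub (G : zmodType) (P Q : G -> Prop) :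
  (forall x, P x -> Q x) -> independent Q -> independent P.
Proof.
move=> PQ [h1 h2]; split; first by move=> x /PQ /h1.
by move=> s n us hs; apply: h2 => // x /hs /PQ.
Qed.

Lemma span_pspan (G : zmodType) (S : G -> Prop) x : Defs.span S x -> pspan S x.
Proof.
move=> [s [n [hs ->]]]; exists [seq (y, n y) | y <- s]; split.
  by move=> p /mapP[y /hs ys ->].
by rewrite /psum big_map.
Qed.

Lemma least_nat (P : nat -> Prop) : (exists n, P n) ->
  exists n, P n /\ forall m, (m < n)%N -> ~ P m.
Proof.
move=> [n Pn]; elim: n {-2}n (leqnn n) Pn => [|N IH] n hn Pn.
  by exists n; split => // m; move: hn; rewrite leqn0 => /eqP ->.
case: (classic (exists m, (m < n)%N /\ P m)) => [[m [mn Pm]]|H].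
  by apply: (IH m) => //; rewrite -ltnS (leq_trans mn hn).
by exists n; split => // m mn Pm; apply: H; exists m.
Qed.

Definition cz (q1 q2 : rat) := q1 - q2 \is a Num.int.

Lemma cz_refl q : cz q q.
Proof. by rewrite /cz subrr rpred0. Qed.
Lemma cz_sym q1 q2 : cz q1 q2 -> cz q2 q1.
Proof. by rewrite /cz -opprB rpredN. Qed.
Lemma cz_trans q1 q2 q3 : cz q1 q2 -> cz q2 q3 -> cz q1 q3.
Proof.
rewrite /cz => h1 h2; have -> : q1 - q3 = (q1 - q2) + (q2 - q3) by ring.
exact: rpredD.
Qed.
Lemma cz_add a a' b b' : cz a a' -> cz b b' -> cz (a + b) (a' + b').
Proof.
rewrite /cz => h1 h2; have -> : a + b - (a' + b') = (a - a') + (b - b') by ring.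
exact: rpredD.
Qed.
Lemma cz_opp a a' : cz a a' -> cz (- a) (- a').
Proof. by rewrite /cz => h; rewrite -opprD rpredN. Qed.
Lemma cz_mulz (t : int) a a' : cz a a' -> cz (t%:~R * a) (t%:~R * a').
Proof. by rewrite /cz -mulrBr => h; apply: rpredM => //; apply: intr_int. Qed.
Lemma cz_int q : q \is a Num.int -> cz q 0.
Proof. by rewrite /cz subr0. Qed.
Lemma cz_int_eq a b : cz a b -> a \is a Num.int -> b \is a Num.int.
Proof. rewrite /cz => h ha; have -> : b = a - (a - b) by ring.
by apply: rpredB. Qed.

Definition frc (q : rat) : rat := q - (Num.floor q)%:~R.

Lemma frc_cz q : cz q (frc q).
Proof. rewrite /cz /frc; have -> : q - (q - (Num.floor q)%:~R) = (Num.floor q)%:~R by ring.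
exact: intr_int. Qed.

Lemma frc_itv q : 0 <= frc q < 1.
Proof.
rewrite /frc; have /andP[h1 h2] := floor_itv q.
rewrite subr_ge0 h1 /= ltrBlDl; by rewrite intrD in h2.
Qed.

Lemma frc_eq q r : cz q r -> 0 <= r < 1 -> frc q = r.
Proof.
rewrite /cz => /intrP[m e] /andP[r0 r1]; rewrite /frc.
have -> : Num.floor q = m.
  apply: floor_def; have -> : q = m%:~R + r by rewrite -e; ring.
  by rewrite intrD lerDl r0 /= ltrD2l.
by rewrite -e; ring.
Qed.

Lemma frc_of_int q : q \is a Num.int -> frc q = 0.
Proof. by move=> h; apply: frc_eq; rewrite ?lexx ?ltr01 // /cz subr0. Qed.

Section Hom.
Variables (G : zmodType) (J : Type) (P : G -> Prop) (f : G -> J -> rat).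
Hypothesis P0 : P 0.
Hypothesis PB : forall u v, P u -> P v -> P (u - v).
Hypothesis fhom : forall u v, P u -> P v -> forall j, cz (f (u + v) j) (f u j + f v j).

Lemma PN u : P u -> P (- u).
Proof. by move=> Pu; rewrite -sub0r; apply: PB. Qed.
Lemma PD u v : P u -> P v -> P (u + v).
Proof. by move=> Pu Pv; rewrite -(opprK v); apply: PB => //; apply: PN. Qed.
Lemma Pmuln u n : P u -> P (u *+ n).
Proof. by move=> Pu; elim: n => [|n IH]; rewrite ?mulr0n // mulrS; apply: PD. Qed.
Lemma Pmulz u c : P u -> P (u *~ c).
Proof.
move=> Pu; case: c => n; first exact: Pmuln.
by rewrite NegzE mulrNz; apply: PN; rewrite -pmulrn; apply: Pmuln.
Qed.

Lemma f0 j : cz (f 0 j) 0.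
Proof.
have := fhom P0 P0 j; rewrite addr0 /cz => h.
have -> : f 0 j - 0 = - (f 0 j - (f 0 j + f 0 j)) by ring.
by rewrite rpredN.
Qed.

Lemma fN u j : P u -> cz (f (- u) j) (- f u j).
Proof.
move=> Pu; have := fhom Pu (PN Pu) j; rewrite subrr => h.
have := cz_trans (cz_sym h) (f0 j); rewrite /cz => h'.
by have -> : f (- u) j - - f u j = f u j + f (- u) j - 0 by ring.
Qed.

Lemma fmuln u n j : P u -> cz (f (u *+ n) j) (n%:R * f u j).
Proof.
move=> Pu; elim: n => [|n IH]; first by rewrite mulr0n mul0r; apply: f0.
rewrite mulrS; apply: (cz_trans (fhom Pu (Pmuln n Pu) j)).
have -> : n.+1%:R * f u j = f u j + n%:R * f u j by rewrite mulrS mulrDl mul1r.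
by apply: cz_add => //; apply: cz_refl.
Qed.

Lemma fmulz u c j : P u -> cz (f (u *~ c) j) (c%:~R * f u j).
Proof.
move=> Pu; case: c => n /=.
  by rewrite -pmulrn; apply: fmuln.
rewrite NegzE mulrNz; apply: (cz_trans (fN j (Pmulz _ Pu))).
rewrite mulrNz mulNr; apply: cz_opp; rewrite -pmulrn.
by have := fmuln n.+1 j Pu; rewrite pmulrn.
Qed.
End Hom.

Lemma half_int (c : int) : ~~ odd `|c|%N -> (c%:~R / 2 : rat) \is a Num.int.
Proof.
move=> hc; have d2 : (2 %| c)%Z by rewrite dvdzE dvdn2.
rewrite -(divzK d2) intrM mulfK; first exact: intr_int.
by rewrite intr_eq0.
Qed.

Definition finvf (T : Type) (G : eqType) (f : T -> G) (y : G) : option T :=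
  match excluded_middle_informative (exists i, y = f i) with
  | left H => Some (proj1_sig (constructive_indefinite_description _ H))
  | right _ => None end.

Lemma finvfK (T : Type) (G : eqType) (f : T -> G) i : injective f -> finvf f (f i) = Some i.
Proof.
move=> fi; rewrite /finvf; case: excluded_middle_informative => [H|[]]; last by exists i.
by congr Some; apply: fi; rewrite -(proj2_sig (constructive_indefinite_description _ H)).
Qed.

Lemma cpick_def (T : Type) (P : T -> Prop) d : ~ (exists x, P x) -> cpick P d = d.
Proof. by rewrite /cpick => H; case: excluded_middle_informative. Qed.

Lemma half_int_inv (c : int) : (c%:~R / 2 : rat) \is a Num.int -> ~~ odd `|c|%N.
Proof.
move=> /intrP[m e]; have : (c%:~R : rat) = (m * 2)%:~R.
  by rewrite intrM -e mulfVK // intr_eq0.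
move/intr_inj => ->; by rewrite abszM oddM /= andbF.
Qed.
Set Implicit Arguments. Unset Strict Implicit. Unset Printing Implicit Defensive.
Import Order.TTheory GRing.Theory Num.Theory.
Local Open Scope ring_scope.
Unset Implicit Arguments.

Section Part2.
Variables (G : zmodType) (I J : Type) (g : I -> G) (h : J -> G).
Hypothesis adG : adapted_system g h.
Hypothesis q2G : quotient_2primary (fun x => exists i, x = g i).
Hypothesis cntG : countable_group G.

Definition Sg (x : G) := exists i, x = g i.
Definition L (x : G) := (exists i, x = g i) \/ (exists j, x = h j).

Lemma g_inj : injective g. Proof. by case: adG. Qed.
Lemma h_inj : injective h. Proof. by case: adG => _ []. Qed.
Lemma gh_neq i j : g i <> h j. Proof. by case: adG => _ [_ []]. Qed.
Lemma g_inf i : infinite_order (g i). Proof. by case: adG => _ [_ [_ []]]. Qed.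
Lemma h2 j : h j *+ 2 = 0. Proof. by case: adG => _ [_ [_ [_ []]]]. Qed.
Lemma maxL : max_independent L. Proof. by case: adG => _ [_ [_ [_ []]]]. Qed.
Lemma indL : independent L. Proof. by case: maxL. Qed.
Lemma indSg : independent Sg.
Proof. by apply: (indep_sub _ indL) => x hx; left. Qed.
Lemma h_neq0 j : h j <> 0.
Proof. by apply: (proj1 indL); right; exists j. Qed.

Lemma q2p x : exists kl : nat * seq (G * int),
  pover Sg kl.2 /\ x *+ 2 ^ kl.1 = psum kl.2.
Proof.
have [k /span_pspan [l [hl e]]] := q2G x.
by exists (k, l).
Qed.

Definition adec x := cpick (fun kl : nat * seq (G * int) =>
  pover Sg kl.2 /\ x *+ 2 ^ kl.1 = psum kl.2) (0%N, [::]).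
Lemma adecP x : pover Sg (adec x).2 /\ x *+ 2 ^ (adec x).1 = psum (adec x).2.
Proof. exact: (cpickP _ (q2p x)). Qed.

Definition a (x : G) (i : I) : rat :=
  (pcoef (adec x).2 (g i))%:~R / (2 ^ (adec x).1)%:R.

Lemma a_char x k l i : pover Sg l -> x *+ 2 ^ k = psum l ->
  a x i = (pcoef l (g i))%:~R / (2 ^ k)%:R.
Proof.
move=> hl e; rewrite /a; have [hl' e'] := adecP x.
set k' := (adec x).1 in e' *; set l' := (adec x).2 in hl' e' *.
have E : psum (pscale l' (2 ^ k)%N) = psum (pscale l (2 ^ k')%N).
  by rewrite !psum_scale -e -e' -!pmulrn -!mulrnA -!expnD addnC.
have := indep_coef indSg (pover_scale hl') (pover_scale hl) E (g i).
move/(info_z (g_inf i))/eqP; rewrite !pcoef_scale subr_eq0 => /eqP E2.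
have h2k : (2 ^ k)%:R != 0 :> rat by rewrite pnatr_eq0 expn_eq0.
have h2k' : (2 ^ k')%:R != 0 :> rat by rewrite pnatr_eq0 expn_eq0.
apply/eqP; rewrite eqr_div //; move: (congr1 (fun z : int => z%:~R : rat) E2).
by rewrite /= !intrM -!pmulrn => ->.
Qed.

Lemma a_add x y i : a (x + y) i = a x i + a y i.
Proof.
have [hx ex] := adecP x; have [hy ey] := adecP y.
set kx := (adec x).1 in ex *; set lx := (adec x).2 in hx ex *.
set ky := (adec y).1 in ey *; set ly := (adec y).2 in hy ey *.
rewrite (a_char (x + y) (kx + ky) (pscale lx (2 ^ ky)%N ++ pscale ly (2 ^ kx)%N) i).
- rewrite (a_char x kx lx i) // (a_char y ky ly i) //.
  rewrite pcoef_cat !pcoef_scale expnD natrM intrD !intrM.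
  rewrite -!pmulrn; field.
  by rewrite !pnatr_eq0 !expn_eq0.
- by apply: pover_cat; apply: pover_scale.
- rewrite psum_cat !psum_scale -ex -ey -!pmulrn -!mulrnA -!expnD mulrnDl.
  by rewrite addnC.
Qed.

Lemma a_dyadic x i : dyadic (a x i).
Proof. by exists (pcoef (adec x).2 (g i)), (adec x).1. Qed.

Definition ginv (y : G) : option I :=
  match excluded_middle_informative (exists i, y = g i) with
  | left H => Some (proj1_sig (constructive_indefinite_description _ H))
  | right _ => None end.

Lemma ginv_g i : ginv (g i) = Some i.
Proof.
rewrite /ginv; case: excluded_middle_informative => [H|[]]; last by exists i.
by congr Some; apply: g_inj; rewrite -(proj2_sig (constructive_indefinite_description _ H)).
Qed.

Lemma a_fsupp x : exists s : list I, forall i, a x i <> 0 -> List.In i s.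
Proof.
exists (pmap ginv (map fst (adec x).2)) => i.
rewrite /a => H; apply: (In_pmap (z:=g i)); last exact: ginv_g.
case: (boolP (g i \in _)) => // /pcoef_notin e; exfalso; apply: H.
by rewrite e mul0r.
Qed.

Lemma a_g i : a (g i) i = 1 /\ forall i', i' <> i -> a (g i) i' = 0.
Proof.
have hl : pover Sg [:: (g i, 1)] by apply: pover1; exists i.
have e : g i *+ 2 ^ 0 = psum [:: (g i, 1)] by rewrite psum1 expn0 mulr1n mulr1z.
split; first by rewrite (a_char _ 0 _ i hl e) pcoef1 eqxx expn0 divr1.
move=> i' ne; rewrite (a_char _ 0 _ i' hl e) pcoef1; case: eqP => [/g_inj E|_].
  by case: ne.
by rewrite mul0r.
Qed.

Lemma a_h j i : a (h j) i = 0.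
Proof.
have e : h j *+ 2 ^ 1 = psum [::] by rewrite psum_nil expn1 h2.
by rewrite (a_char (h j) 1 [::] i (@pover_nil _ Sg) e) pcoef_nil mul0r.
Qed.

Lemma a0_tors z : (forall i, a z i = 0) -> exists k, z *+ 2 ^ k = 0.
Proof.
move=> H; have [hl e] := adecP z; exists (adec z).1; rewrite e.
apply: psum0_of_coef => y.
case: (boolP (y \in map fst (adec z).2)) => [/mapP[p pl ->]|/pcoef_notin ->].
  have [i ->] := hl p pl; have := H i; rewrite /a => /eqP.
  rewrite mulf_eq0 invr_eq0 pnatr_eq0 expn_eq0 orbF intr_eq0 => /eqP ->.
  by rewrite mulr0z.
by rewrite mulr0z.
Qed.

Definition en : G -> nat := proj1_sig (constructive_indefinite_description _ cntG).
Lemma en_inj : injective en.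
Proof. exact: (proj2_sig (constructive_indefinite_description _ cntG)). Qed.
Definition xs (n : nat) : G := cpick (fun x => en x = n) 0.
Lemma xs_en x : xs (en x) = x.
Proof. by apply: en_inj; apply: (cpickP (P := fun y => en y = en x)); exists x. Qed.

Fixpoint B (n : nat) : G -> Prop :=
  match n with
  | 0%N => pspan L
  | n'.+1 => fun z => exists b m, B n' b /\ z = b + xs n' *~ m
  end.

Lemma B0 n : B n 0.
Proof.
elim: n => [|n IH] /=; first by exists [::]; rewrite psum_nil; split => //; apply: pover_nil.
by exists 0, 0; rewrite mulr0z addr0.
Qed.

Lemma BB n u v : B n u -> B n v -> B n (u - v).
Proof.
elim: n u v => [|n IH] u v /=.
  move=> [lu [hu ->]] [lv [hv ->]]; exists (lu ++ pneg lv); split.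
    by apply: pover_cat => //; apply: pover_scale.
  by rewrite psum_cat psum_scale mulrN1z.
move=> [b1 [m1 [h1 ->]]] [b2 [m2 [h2' ->]]]; exists (b1 - b2), (m1 - m2); split.
  exact: IH.
by rewrite mulrzBr opprD addrACA.
Qed.

Lemma B_S n u : B n u -> B n.+1 u.
Proof. by move=> hu; exists u, 0; rewrite mulr0z addr0. Qed.

Lemma B_le n m u : (n <= m)%N -> B n u -> B m u.
Proof.
move=> nm; elim: m nm => [|m IH]; first by rewrite leqn0 => /eqP ->.
by rewrite leq_eqVlt => /orP[/eqP ->//|nm] /(IH nm) /B_S.
Qed.

Lemma B_xs n : B n.+1 (xs n).
Proof. by exists 0, 1; rewrite add0r mulr1z; split => //; apply: B0. Qed.

Lemma B_own x : B (en x).+1 x.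
Proof. by rewrite -{2}(xs_en x); apply: B_xs. Qed.

Lemma B_L n u : pspan L u -> B n u.
Proof. by move=> hu; by apply: (B_le 0 n u). Qed.

Definition fsupp (u : J -> rat) := exists s : list J, forall j, ~ List.In j s -> u j \is a Num.int.

Lemma fsupp_add u v : fsupp u -> fsupp v -> fsupp (fun j => u j + v j).
Proof.
move=> [s1 h1] [s2 h2]; exists (s1 ++ s2) => j hj.
by apply: rpredD; [apply: h1|apply: h2] => H; apply: hj; apply: List.in_or_app; [left|right].
Qed.

Lemma fsupp_mulz (t : int) u : fsupp u -> fsupp (fun j => t%:~R * u j).
Proof. by move=> [s hs]; exists s => j hj; apply: rpredM; [apply: intr_int|apply: hs]. Qed.

Definition phi0 (z : G) : J -> rat :=
  let l := cpick (fun l => pover L l /\ z = psum l) [::] in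
  fun j => (pcoef l (h j))%:~R / 2.

Lemma phi0_char l j : pover L l -> cz (phi0 (psum l) j) ((pcoef l (h j))%:~R / 2).
Proof.
move=> hl; rewrite /phi0.
have [hl' e'] := cpickP (P := fun l' => pover L l' /\ psum l = psum l') [::] (ex_intro _ l (conj hl erefl)).
set l' := cpick _ _ in hl' e' *.
have := indep_coef indL hl' hl (esym e') (h j); rewrite ord2_z ?h2 //.
case: ifP => [_ /h_neq0 //|/negbT od _].
rewrite /cz -mulrBl -intrB; exact: half_int.
Qed.

Lemma phi0_hom u v j : pspan L u -> pspan L v ->
  cz (phi0 (u + v) j) (phi0 u j + phi0 v j).
Proof.
move=> [lu [hu ->]] [lv [hv ->]]; rewrite -psum_cat.
apply: (cz_trans (phi0_char _ j (pover_cat hu hv))).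
rewrite pcoef_cat intrD mulrDl; apply: cz_add; apply: cz_sym; exact: phi0_char.
Qed.

Lemma phi0_fsupp z : fsupp (phi0 z).
Proof.
rewrite /phi0; set l := cpick _ _.
exists (pmap (finvf h) (map fst l)) => j hj.
case: (boolP (h j \in map fst l)) => [hin|/pcoef_notin ->]; last by rewrite mul0r rpred0.
exfalso; apply: hj; apply: (In_pmap (z := h j)) => //.
exact: (finvfK j h_inj).
Qed.

Definition dprop n d := (0 < d)%N /\ B n (xs n *+ d) /\
  forall d', (0 < d')%N -> (d' < d)%N -> ~ B n (xs n *+ d').
Definition dmin n := cpick (dprop n) 0%N.

Lemma dmin_B n : B n (xs n *+ dmin n).
Proof.
case: (classic (exists d, dprop n d)) => [H|H].
  by have [_ []] := cpickP 0%N H.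
by rewrite /dmin cpick_def // mulr0n; apply: B0.
Qed.

Lemma dmin_mult n c : B n (xs n *~ c) -> exists t : int, c = t * (dmin n)%:Z.
Proof.
move=> Bc.
case: (classic (exists d, (0 < d)%N /\ B n (xs n *+ d))) => [H|H]; last first.
  exists 0; rewrite mul0r; case: c Bc => [[|k]|k] Bc //; exfalso; apply: H.
    by exists k.+1.
  exists k.+1; split => //; move: Bc; rewrite NegzE mulrNz -pmulrn => Bc.
  by rewrite -(opprK (_ *+ _)); apply: (PN (B0 n) (BB n)).
have [d0 [[d0p d0B] d0min]] := least_nat H.
have Hd : exists d, dprop n d.
  by exists d0; split => //; split => // d' d'p d'lt Bd'; apply: (d0min d' d'lt).
have [dp [dB dmn]] := cpickP 0%N Hd; rewrite -/(dmin n) in dp dB dmn.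
set d := dmin n in dp dB dmn *.
exists (c %/ d)%Z.
have dz : (d%:Z != 0) by rewrite eqz_nat -lt0n.
have r0 := modz_ge0 c dz.
have rlt : (c %% d)%Z < d%:Z by apply: ltz_pmod; rewrite ltz_nat.
have Br : B n (xs n *~ (c %% d)%Z).
  have -> : (c %% d)%Z = c - (c %/ d)%Z * d by rewrite {2}(divz_eq c d) addrAC subrr add0r.
  rewrite mulrzBr; apply: (BB n) => //.
  by rewrite mulrC mulrzA -pmulrn; apply: (Pmulz (B0 n) (BB n)).
rewrite {1}(divz_eq c d); move: r0 rlt Br; case: (c %% d)%Z => [[|r]|r] // _ rlt Br.
  by rewrite addr0.
by exfalso; apply: (dmn r.+1) => //; rewrite -ltz_nat.
Qed.

Definition yv n (ph : G -> J -> rat) (j : J) : rat :=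
  frc (ph (xs n *+ dmin n) j) / (dmin n)%:R.
Definition step n (ph : G -> J -> rat) (z : G) : J -> rat :=
  let bm := cpick (fun bm : G * int => B n bm.1 /\ z = bm.1 + xs n *~ bm.2) (0, 0) in
  fun j => ph bm.1 j + bm.2%:~R * yv n ph j.

Definition HomOn n (ph : G -> J -> rat) :=
  forall u v, B n u -> B n v -> forall j, cz (ph (u + v) j) (ph u j + ph v j).

Lemma dy n ph : HomOn n ph -> forall j,
  cz ((dmin n)%:R * yv n ph j) (ph (xs n *+ dmin n) j).
Proof.
move=> hom j; rewrite /yv; case: (eqVneq (dmin n) 0%N) => [->|dn].
  rewrite mul0r mulr0n; apply: cz_sym; exact: (f0 (B0 n) hom).
rewrite mulrC divfK; first by apply: cz_sym; apply: frc_cz.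
by rewrite pnatr_eq0.
Qed.

Lemma step_val n ph : HomOn n ph -> forall b m, B n b -> forall j,
  cz (step n ph (b + xs n *~ m) j) (ph b j + m%:~R * yv n ph j).
Proof.
move=> hom b m Bb j; rewrite /step.
set P := fun bm : G * int => _.
have Hex : exists bm, P bm by exists (b, m).
move: (cpickP (0, 0) Hex); case: (cpick P (0, 0)) => b' m' [/= Bb' e].
have E' : b + xs n *~ (m - m') = b' by rewrite mulrzBr addrA e addrK.
have Bw : B n (xs n *~ (m - m')).
  have -> : xs n *~ (m - m') = b' - b by rewrite -E' [RHS]addrC addKr.
  exact: BB.
have [t ht] := dmin_mult n (m - m') Bw.
have c1 : cz (ph b' j) (ph b j + t%:~R * ((dmin n)%:R * yv n ph j)).
  rewrite -E'; apply: (cz_trans (hom _ _ Bb Bw j)); apply: cz_add; first exact: cz_refl.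
  rewrite ht mulrC mulrzA -pmulrn.
  apply: (cz_trans (fmulz (B0 n) (BB n) hom t j (dmin_B n))).
  by apply: cz_mulz; apply: cz_sym; apply: dy.
apply: (cz_trans (cz_add c1 (cz_refl (m'%:~R * yv n ph j)))).
have hm : m = t * (dmin n)%:Z + m' by rewrite -ht subrK.
rewrite hm intrD intrM -[((dmin n)%:Z)%:~R]pmulrn.
have -> : ph b j + t%:~R * ((dmin n)%:R * yv n ph j) + m'%:~R * yv n ph j =
  ph b j + (t%:~R * (dmin n)%:R + m'%:~R) * yv n ph j by ring.
exact: cz_refl.
Qed.

Lemma step_hom n ph : HomOn n ph -> HomOn n.+1 (step n ph).
Proof.
move=> hom u v [b1 [m1 [B1 ->]]] [b2 [m2 [B2 ->]]] j.
have -> : b1 + xs n *~ m1 + (b2 + xs n *~ m2) = (b1 + b2) + xs n *~ (m1 + m2).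
  by rewrite mulrzDr addrACA.
apply: (cz_trans (step_val _ _ hom _ (m1 + m2) (@PD _ (B n) (B0 n) (BB n) _ _ B1 B2) j)).
apply: cz_sym; apply: (cz_trans (cz_add (step_val _ _ hom _ m1 B1 j) (step_val _ _ hom _ m2 B2 j))).
apply: cz_sym; apply: (cz_trans (cz_add (hom _ _ B1 B2 j) (cz_refl ((m1 + m2)%:~R * yv n ph j)))).
rewrite intrD; have -> : ph b1 j + ph b2 j + ((m1)%:~R + (m2)%:~R) * yv n ph j =
  ph b1 j + m1%:~R * yv n ph j + (ph b2 j + m2%:~R * yv n ph j) by ring.
exact: cz_refl.
Qed.

Lemma step_coh n ph : HomOn n ph -> forall u, B n u -> forall j,
  cz (step n ph u j) (ph u j).
Proof.
move=> hom u Bu j; have := step_val _ _ hom u 0 Bu j.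
by rewrite mulr0z addr0 mul0r addr0.
Qed.

Lemma step_fsupp n ph : (forall u, fsupp (ph u)) -> forall z, fsupp (step n ph z).
Proof.
move=> hf z; rewrite /step /=; apply: fsupp_add; first exact: hf.
apply: fsupp_mulz; have [s hs] := hf (xs n *+ dmin n); exists s => j hj.
by rewrite /yv frc_of_int ?mul0r ?rpred0 //; apply: hs.
Qed.

Fixpoint phi n : G -> J -> rat :=
  match n with 0%N => phi0 | n'.+1 => step n' (phi n') end.

Lemma phi_inv n : HomOn n (phi n) /\ forall u, fsupp (phi n u).
Proof.
elim: n => [|n [IH1 IH2]].
  by split; [move=> u v Bu Bv j; apply: phi0_hom|apply: phi0_fsupp].
by split; [apply: step_hom|apply: step_fsupp].
Qed.

Lemma phi_coh n m u j : (n <= m)%N -> B n u -> cz (phi m u j) (phi n u j).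
Proof.
move=> nm Bu; elim: m nm => [|m IH]; first by rewrite leqn0 => /eqP ->; apply: cz_refl.
rewrite leq_eqVlt => /orP[/eqP ->|nm]; first exact: cz_refl.
apply: (cz_trans _ (IH nm)); apply: (step_coh m (phi m) (proj1 (phi_inv m))).
exact: (B_le n m u).
Qed.

Definition NN x := (en x).+1.
Definition bb (x : G) (j : J) : rat := frc (phi (NN x) x j).

Lemma homM m : HomOn m (phi m). Proof. exact: (proj1 (phi_inv m)). Qed.

Lemma bb_cz x m j : (NN x <= m)%N -> cz (bb x j) (phi m x j).
Proof.
move=> hm; apply: (cz_trans (cz_sym (frc_cz _))); apply: cz_sym.
by apply: phi_coh => //; apply: B_own.
Qed.

Lemma phi_L m l j : pover L l -> cz (phi m (psum l) j) ((pcoef l (h j))%:~R / 2).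
Proof.
move=> hl; apply: (cz_trans (phi_coh 0 m _ j _ _)) => //; first by exists l.
exact: phi0_char.
Qed.

Lemma SgL l : pover Sg l -> pover L l.
Proof. by move=> hl p /hl hp; left. Qed.

Lemma bb_hom x y j : is_integer (bb (x + y) j - (bb x j + bb y j)).
Proof.
apply/intrP; set M := maxn (NN (x + y)) (maxn (NN x) (NN y)).
have h1 : (NN (x + y) <= M)%N by rewrite leq_maxl.
have h2 : (NN x <= M)%N by rewrite /M (leq_trans _ (leq_maxr _ _)) ?leq_maxl.
have h3 : (NN y <= M)%N by rewrite /M (leq_trans _ (leq_maxr _ _)) ?leq_maxr.
apply: (cz_trans (bb_cz _ _ j h1)); apply: cz_sym.
apply: (cz_trans (cz_add (bb_cz _ _ j h2) (bb_cz _ _ j h3))); apply: cz_sym.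
apply: homM; apply: (B_le _ M _ _ (B_own _)) => //.
Qed.

Lemma bb_fsupp x : exists s : list J, forall j, bb x j <> 0 -> List.In j s.
Proof.
have [s hs] := proj2 (phi_inv (NN x)) x; exists s => j hj.
apply: NNPP => nin; apply: hj; rewrite /bb frc_of_int //; exact: hs.
Qed.

Lemma bb_Z2 x j : Z2inf_rep (bb x j).
Proof.
split; last by have /andP[-> ->] := frc_itv (phi (NN x) x j).
have [hl e] := adecP x; set k := (adec x).1 in e; set l := (adec x).2 in hl e.
have c1 : cz (phi (NN x) (x *+ 2 ^ k) j) ((2 ^ k)%:R * phi (NN x) x j).
  exact: (fmuln (B0 _) (BB _) (homM _) _ _ (B_own x)).
have c2 : cz (phi (NN x) (x *+ 2 ^ k) j) 0.
  rewrite e; apply: (cz_trans (phi_L _ _ j (SgL _ hl))).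
  rewrite pcoef_notin ?mul0r; first exact: cz_refl.
  apply/mapP => -[p /hl [i ei] ej]; apply: (gh_neq i j); by rewrite -ei -ej.
have c3 : cz ((2 ^ k)%:R * bb x j) 0.
  apply: (cz_trans _ (cz_trans (cz_sym c1) c2)).
  rewrite /bb !pmulrn; apply: cz_mulz; apply: cz_sym; exact: frc_cz.
move: c3; rewrite /cz subr0 => /intrP[m em]; exists m, k.
by rewrite -em mulrAC divff ?mul1r // pnatr_eq0 expn_eq0.
Qed.

Lemma inj_core z M : B M z -> (forall i, a z i = 0) -> (forall j, cz (phi M z j) 0) -> z = 0.
Proof.
move=> BM az pz; apply: NNPP => z0.
have [k0 [ek0 mink]] := least_nat (a0_tors z az).
case: k0 ek0 mink => [|k] ek mink; first by apply: z0; rewrite expn0 mulr1n in ek.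
set w := z *+ 2 ^ k.
have w0 : w <> 0 by apply: (mink k).
have w2 : w *+ 2 = 0 by rewrite /w -mulrnA -expnSr.
have [l [hl ew]] := socle_pspan maxL w0 w2.
have hj : forall j, ((pcoef l (h j))%:~R / 2 : rat) \is a Num.int.
  move=> j; have c : cz (phi M (psum l) j) 0.
    rewrite -ew; apply: (cz_trans (fmuln (B0 _) (BB _) (homM _) _ _ BM)).
    by have := cz_mulz (2 ^ k)%:Z (pz j); rewrite mulr0 -pmulrn.
  by have := cz_trans (cz_sym (phi_L M _ j hl)) c; rewrite /cz subr0.
apply: w0; rewrite ew; apply: psum0_of_coef => y.
have := indep_psum0 indL (pover_scale (c := 2) hl) _ y.
rewrite psum_scale pcoef_scale -ew -pmulrn w2 => /(_ erefl) H.
move: H; case: (boolP (y \in map fst l)) => [/mapP[p /hl hp ->]|/pcoef_notin ->]; last by rewrite mulr0z.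
case: hp => [[i ->]|[j ->]] H.
  have := info_z (g_inf i) H => /eqP; rewrite mulf_eq0 orbF => /eqP ->.
  by rewrite mulr0z.
by rewrite ord2_z ?h2 // (negbTE (half_int_inv (hj j))).
Qed.

Lemma bb_L x l j : pover L l -> x = psum l -> cz (bb x j) ((pcoef l (h j))%:~R / 2).
Proof.
move=> hl ex; apply: (cz_trans (bb_cz x _ j (leqnn _))).
by rewrite ex; apply: phi_L.
Qed.


Lemma part2_main : exists (a : G -> I -> rat) (b : G -> J -> rat),
        dsum_monomorphism a b /\
        (forall i, a (g i) i = 1 /\ (forall i', i' <> i -> a (g i) i' = 0)
                   /\ (forall j, b (g i) j = 0)) /\
        (forall j, (forall i, a (h j) i = 0) /\ b (h j) j = 1 / 2
                   /\ (forall j', j' <> j -> b (h j) j' = 0)).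
Proof.
exists a, bb; split; last split.
- split; first exact: a_dyadic.
  split; first exact: bb_Z2.
  split; first exact: a_fsupp.
  split; first exact: bb_fsupp.
  split; first exact: a_add.
  split; first exact: bb_hom.
  move=> x y ea eb.
  set M := maxn (NN x) (NN y).
  have h1 : (NN x <= M)%N by rewrite leq_maxl.
  have h2 : (NN y <= M)%N by rewrite leq_maxr.
  have Bx : B M x := B_le _ M _ h1 (B_own x).
  have By : B M y := B_le _ M _ h2 (B_own y).
  apply/eqP; rewrite -subr_eq0; apply/eqP.
  apply: (inj_core (x - y) M (BB M x y Bx By)).
    move=> i; have := a_add (x - y) y i; rewrite subrK ea => /eqP.
    by move=> /eqP e; apply: (addIr (a y i)); rewrite add0r -e.
  move=> j; have c1 := homM M (x - y) y (BB M x y Bx By) By j.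
  rewrite subrK in c1.
  have c2 : cz (phi M x j) (phi M y j).
    apply: (cz_trans (cz_sym (bb_cz x M j h1))); rewrite eb; exact: bb_cz.
  have := cz_trans (cz_sym c1) c2; rewrite /cz.
  by have -> : phi M (x - y) j + phi M y j - phi M y j = phi M (x - y) j - 0 by ring.
- move=> i; have [ha1 ha2] := a_g i; split => //; split => // j.
  have hl : pover L [:: (g i, 1)] by apply: pover1; left; exists i.
  have := bb_L (g i) [:: (g i, 1)] j hl; rewrite psum1 mulr1z pcoef1 => /(_ erefl).
  case: eqP => [e|_]; first by case: (gh_neq i j).
  rewrite mul0r => c; rewrite /bb; apply: frc_eq; last by rewrite lexx ltr01.
  exact: (cz_trans (cz_sym (bb_cz (g i) _ j (leqnn _))) c).
- move=> j; split; first exact: a_h.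
  have hl : pover L [:: (h j, 1)] by apply: pover1; right; exists j.
  have K := fun j' => bb_L (h j) [:: (h j, 1)] j' hl.
  rewrite psum1 mulr1z in K.
  split.
    have := K j erefl; rewrite pcoef1 eqxx => c.
    rewrite /bb; apply: frc_eq.
      apply: (cz_trans _ c); apply: cz_sym; apply: (cz_trans _ (bb_cz (h j) _ j (leqnn _))).
      exact: cz_refl.
    by rewrite mul1r invr_ge0 ler0n /= invf_lt1 ?ltr0n // ltr1n.
  move=> j' nj; have := K j' erefl; rewrite pcoef1; case: eqP => [/h_inj e|_].
    by case: nj.
  rewrite mul0r => c; rewrite /bb; apply: frc_eq; last by rewrite lexx ltr01.
  exact: (cz_trans (cz_sym (bb_cz (h j) _ j' (leqnn _))) c).
Qed.
End Part2.
Set Implicit Arguments. Unset Strict Implicit. Unset Printing Implicit Defensive.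
Import Order.TTheory GRing.Theory Num.Theory.
Local Open Scope ring_scope.
Unset Implicit Arguments.

Definition bool_of (P : Prop) : bool :=
  if excluded_middle_informative P then true else false.
Lemma bool_ofP (P : Prop) : bool_of P <-> P.
Proof. by rewrite /bool_of; case: excluded_middle_informative. Qed.

Lemma indep_of_p (G : zmodType) (U : G -> Prop) :
  (forall x, U x -> x <> 0) ->
  (forall l, pover U l -> psum l = 0 -> forall y, y *~ pcoef l y = 0) ->
  independent U.
Proof.
move=> h0 hp; split => // s n us hs e x xs.
have h1 : pover U [seq (y, n y) | y <- s] by move=> p /mapP[y /hs ys ->].
have h2 : psum [seq (y, n y) | y <- s] = 0 by rewrite /psum big_map.
by have := hp _ h1 h2 x; rewrite pcoef_map_uniq.
Qed.

Section Part1.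
Variables (G : zmodType) (S : G -> Prop).
Hypothesis cntG : countable_group G.
Hypothesis hS : max_independent_inf S.
Hypothesis qS : quotient_2primary S.

Definition en1 : G -> nat := proj1_sig (constructive_indefinite_description _ cntG).
Lemma en1_inj : injective en1.
Proof. exact: (proj2_sig (constructive_indefinite_description _ cntG)). Qed.

Definition soc (x : G) := x *+ 2 = 0.
Definition Hp (x : G) := soc x /\ ~ pspan (fun y => soc y /\ (en1 y < en1 x)%N) x.
Definition U (x : G) := S x \/ Hp x.

Lemma indS : independent S. Proof. by case: hS. Qed.
Lemma S_inf x : S x -> infinite_order x. Proof. by move=> Sx; case: hS => _ [H _]; apply: H. Qed.

Lemma Hp_indep n l : pover Hp l -> (forall p, p \in l -> (en1 p.1 < n)%N) ->
  psum l = 0 -> forall y, y *~ pcoef l y = 0.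
Proof.
elim: n l => [|n IH] l hl hn e y.
  case: l hl hn e => [|p l] hl hn e; first by rewrite pcoef_nil mulr0z.
  by have := hn p; rewrite inE eqxx => /(_ erefl).
case: (classic (exists p, p \in l /\ en1 p.1 = n)) => [[p0 [p0l ep0]]|H]; last first.
  apply: (IH l hl _ e) => p pl; have := hn p pl; rewrite ltnS leq_eqVlt => /orP[/eqP ep|//].
  by exfalso; apply: H; exists p.
set x0 := p0.1.
set l1 := filter (fun p => p.1 == x0) l; set l2 := filter (predC (fun p => p.1 == x0)) l.
have e1 : psum l1 = x0 *~ pcoef l x0.
  rewrite (@psum_same G x0 l1); last by move=> p; rewrite mem_filter => /andP[/eqP].
  by rewrite (pcoef_split (fun p => p.1 == x0) l) (pcoef_notin (l := l2)) ?addr0 //; apply/mapP => -[p]; rewrite mem_filter /= => /andP[/negP ne _] E; apply: ne; rewrite -E.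
have hl2 : pover Hp l2 by apply: pover_filter.
have hn2 : forall p, p \in l2 -> (en1 p.1 < n)%N.
  move=> p; rewrite mem_filter /= => /andP[ne pl]; have := hn p pl.
  rewrite ltnS leq_eqVlt => /orP[/eqP ep|//]; exfalso; move/negP: ne; apply.
  by apply/eqP; apply: en1_inj; rewrite ep ep0.
have hx0 : Hp x0 by apply: (hl p0).
have sx0 := proj1 hx0.
move: e; rewrite (psum_split (fun p => p.1 == x0) l) -/l1 -/l2 e1 => e.
have c0 : x0 *~ pcoef l x0 = 0.
  apply: NNPP => ne; apply: (proj2 hx0).
  move: ne e; rewrite ord2_z //; case: ifP => // _ _ e.
  have E : x0 = psum (pneg l2) by rewrite psum_scale mulrN1z; apply/eqP; rewrite -addr_eq0 e.
  exists (pneg l2); split => //.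
  move=> p /mapP[q ql ->] /=; split; first exact: (proj1 (hl2 q ql)).
  by rewrite /x0 ep0; apply: hn2.
move: e; rewrite c0 add0r => e2.
have IH2 := IH l2 hl2 hn2 e2.
rewrite (pcoef_split (fun p => p.1 == x0) l) -/l1 -/l2.
case: (eqVneq y x0) => [->|ne].
  rewrite (pcoef_notin (l := l2)); last first.
    by apply/mapP => -[p]; rewrite mem_filter /= => /andP[/negP nq _] E; apply: nq; rewrite -E.
  rewrite addr0; move: c0.
  by rewrite (pcoef_split (fun p => p.1 == x0) l) -/l1 -/l2 (pcoef_notin (l := l2)) ?addr0 //; apply/mapP => -[p]; rewrite mem_filter /= => /andP[/negP nq _] E; apply: nq; rewrite -E.
rewrite (pcoef_notin (l := l1)) ?add0r //.
by apply/mapP => -[p]; rewrite mem_filter => /andP[/eqP E1 _] E; move/eqP: ne; apply; rewrite E E1.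
Qed.

Lemma Hp_neq0 x : Hp x -> x <> 0.
Proof.
by move=> [_ nsp] x0; apply: nsp; exists [::]; rewrite psum_nil x0; split => //; apply: pover_nil.
Qed.

Lemma Hp_pindep l : pover Hp l -> psum l = 0 -> forall y, y *~ pcoef l y = 0.
Proof.
move=> hl; apply: (Hp_indep (\max_(p <- l) en1 p.1).+1 l hl) => p pl.
by rewrite ltnS (leq_bigmax_seq (F := fun p : G * int => en1 p.1)).
Qed.

Lemma soc_span z : soc z -> pspan Hp z.
Proof.
suff H : forall n z, (en1 z < n)%N -> soc z -> pspan Hp z by apply: H (ltnSn _).
elim=> [|n IH] {}z // zn sz.
case: (classic (Hp z)) => hz.
  by exists [:: (z, 1)]; rewrite psum1 mulr1z; split => //; apply: pover1.
have [l [hl ->]] : pspan (fun y => soc y /\ (en1 y < en1 z)%N) z.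
  by apply: NNPP => H; apply: hz.
apply: pspan_comb => p pl; have [sp ep] := hl p pl.
by apply: IH => //; rewrite (leq_trans ep) // -ltnS.
Qed.

Lemma U_indep : independent U.
Proof.
apply: indep_of_p.
  by move=> x [/(proj1 indS)|/Hp_neq0].
move=> l hl e y.
set a := fun p : G * int => bool_of (S p.1).
set lS := filter a l; set lH := filter (predC a) l.
have hlH : pover Hp lH.
  move=> p; rewrite mem_filter => /andP[na pl]; case: (hl p pl) => // sp.
  by move/negP: na; case; apply/bool_ofP.
have hlS : pover S lS by move=> p; rewrite mem_filter => /andP[/bool_ofP].
have eH2 : psum lH *~ 2 = 0.
  rewrite /psum mulrz_suml big1_seq // => p /andP[_ pl].
  by rewrite -mulrzA (mulrC p.2) mulrzA -pmulrn (proj1 (hlH p pl)) mul0rz.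
have eS2 : psum (pscale lS 2) = 0.
  rewrite psum_scale; move: e; rewrite (psum_split a l) -/lS -/lH => /eqP.
  rewrite addr_eq0 => /eqP ->; by rewrite mulNrz eH2 oppr0.
have cS : forall z, pcoef lS z = 0.
  move=> z; have := indep_psum0 indS (pover_scale (c := 2) hlS) eS2 z.
  rewrite pcoef_scale; case: (boolP (z \in map fst lS)) => [/mapP[p /hlS sp ->]|/pcoef_notin -> //].
  by move/(info_z (S_inf _ sp))/eqP; rewrite mulf_eq0 orbF => /eqP.
have eS : psum lS = 0 by apply: psum0_of_coef => z; rewrite cS mulr0z.
have eH : psum lH = 0 by move: e; rewrite (psum_split a l) -/lS -/lH eS add0r.
by rewrite (pcoef_split a l) -/lS -/lH cS add0r; apply: Hp_pindep.
Qed.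

Lemma S_tors (y : G) n : (0 < n)%N -> y *+ n = 0 -> exists k, y *+ 2 ^ k = 0.
Proof.
move=> n0 yn; have [k /span_pspan [l [hl e]]] := qS y; exists k; rewrite e.
apply: psum0_of_coef => z.
have e2 : psum (pscale l n%:Z) = 0 by rewrite psum_scale -e -pmulrn -mulrnA mulnC mulrnA yn mul0rn.
have := indep_psum0 indS (pover_scale hl) e2 z; rewrite pcoef_scale.
case: (boolP (z \in map fst l)) => [/mapP[p /hl sp ->]|/pcoef_notin -> //].
move/(info_z (S_inf _ sp))/eqP; rewrite mulf_eq0 eqz_nat => /orP[/eqP -> //|].
by move=> /eqP n00; move: n0; rewrite n00.
Qed.

Lemma U_max : max_independent U.
Proof.
split; first exact: U_indep.
move=> y nUy hV.
have y0 : y <> 0 by apply: (proj1 hV); right.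
case: (classic (infinite_order y)) => hy.
  case: hS => _ [_ hmax]; apply: (hmax y) => //; first by move=> Sy; apply: nUy; left.
  by apply: (indep_sub _ hV) => x [Sx|->]; [left; left|right].
have [n [n0 yn]] : exists n, (0 < n)%N /\ y *+ n = 0.
  apply: NNPP => H; apply: hy => n n0 yn; apply: H; by exists n.
have [k0 [ek mink]] := least_nat (S_tors y n n0 yn).
case: k0 ek mink => [|k] ek mink; first by apply: y0; rewrite expn0 mulr1n in ek.
set w := y *+ 2 ^ k.
have w0 : w <> 0 by apply: (mink k).
have w2 : soc w by rewrite /soc /w -mulrnA -expnSr.
have [l [hl ew]] := soc_span w w2.
set l' := (y, (2 ^ k)%N%:Z) :: pneg l.
have hl' : pover (fun x => U x \/ x = y) l'.
  move=> p; rewrite inE => /orP[/eqP ->|/mapP[q ql ->]] /=; first by right.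
  by left; right; apply: hl.
have e' : psum l' = 0.
  rewrite /l' (psum_cat [:: _] (pneg l)) psum1 psum_scale -ew -pmulrn mulrN1z.
  by rewrite subrr.
have := indep_psum0 hV hl' e' y.
rewrite /l' (pcoef_cat [:: _] (pneg l)) pcoef1 eqxx pcoef_scale.
rewrite pcoef_notin ?mul0r ?addr0 -?pmulrn //.
apply/mapP => -[p pl ey]; apply: nUy; right; rewrite ey; exact: hl.
Qed.
End Part1.
Import Order.TTheory GRing.Theory Num.Theory.
Local Open Scope ring_scope.

Lemma exval (G : zmodType) (P : G -> Prop) :
  (fun x => exists i : {x : G | bool_of (P x)}, x = val i) = P.
Proof.
apply: functional_extensionality => x; apply: propositional_extensionality; split.
  by move=> [[y py] /= ->]; apply/bool_ofP.
move=> px; have py : bool_of (P x) by apply/bool_ofP.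
by exists (exist _ x py).
Qed.

Theorem mainTheorem7 (G : zmodType)
  (cntG : countable_group G) (ebqG : even_by_quotient G) :
  (exists (I J : Type) (g : I -> G) (h : J -> G),
      adapted_system g h /\
      exists (a : G -> I -> rat) (b : G -> J -> rat), dsum_monomorphism a b) /\
  (forall (I J : Type) (g : I -> G) (h : J -> G),
      adapted_system g h ->
      quotient_2primary (fun x => exists i, x = g i) ->
      exists (a : G -> I -> rat) (b : G -> J -> rat),
        dsum_monomorphism a b /\
        (forall i, a (g i) i = 1 /\ (forall i', i' <> i -> a (g i) i' = 0)
                   /\ (forall j, b (g i) j = 0)) /\
        (forall j, (forall i, a (h j) i = 0) /\ b (h j) j = 1 / 2
                   /\ (forall j', j' <> j -> b (h j) j' = 0))).
Proof.
split; last by move=> I J g h ad q; exact: (part2_main G I J g h ad q cntG).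
have [S [hS qS]] := ebqG.
pose I := ({x : G | bool_of (S x)}).
pose J := ({x : G | bool_of (Hp G cntG x)}).
have qI : quotient_2primary (fun x => exists i : I, x = val i) by rewrite /I exval.
have ad : adapted_system (fun i : I => val i) (fun j : J => val j).
  split; first exact: val_inj.
  split; first exact: val_inj.
  split.
    move=> [x px] [y py] /= exy; move: px py; rewrite exy => /bool_ofP px /bool_ofP [sy _].
    by apply: (S_inf G S hS y px 2).
  split; first by move=> [x px] /=; exact: (S_inf G S hS x ((bool_ofP _).1 px)).
  split; first by move=> [x px] /=; have [sx _] := (bool_ofP _).1 px.
  have -> : (fun x => (exists i : I, x = val i) \/ (exists j : J, x = val j)) = U G S cntG.
    apply: functional_extensionality => x; apply: propositional_extensionality.
    rewrite /U; move: (exval _ S) (exval _ (Hp G cntG)) => e1 e2.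
    by rewrite -[S x](f_equal (fun f => f x) e1) -[Hp G cntG x](f_equal (fun f => f x) e2).
  exact: U_max.
exists I, J, (fun i : I => val i), (fun j : J => val j); split => //.
have [a [b [hm _]]] := part2_main G I J _ _ ad qI cntG.
by exists a, b.
Qed.
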